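(* Let $a>1$ be an integer. Then $$\lim_{n\to\infty}\frac{\#\{k\le n : \mathrm{LB}_3(a^k)=(1,0,0)\}}{n}=\log_\phi(1+\phi^{-2}),\qquad \lim_{n\to\infty}\frac{\#\{k\le n : \mathrm{LB}_3(a^k)=(1,0,1)\}}{n}=\log_\phi\frac{\phi}{1+\phi^{-2}};$$ in particular both limits exist.
   Context: Let $F$ be the shifted Fibonacci sequence: $F_1=1$, $F_2=2$, $F_{n+2}=F_{n+1}+F_n$. By Zeckendorf's theorem every positive integer $m$ has a unique expansion $m=\sum_{k=1}^M \epsilon(k)F_{M-k+1}$ with $\epsilon(k)\in\{0,1\}$, $\epsilon(1)=1$ and $\epsilon(k)\epsilon(k+1)=0$ for all $k\le M-1$. For $s\in\mathbb{N}$ with $M\ge s$, $\mathrm{LB}_s(m):=(\epsilon(1),\dots,\epsilon(s))$ (the leading block of length $s$); it is undefined if $M<s$. $\phi=(1+\sqrt5)/2$ is the golden ratio. *)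

(* Defs.v *)
From HB Require Import structures.
From mathcomp Require Import all_boot all_order all_algebra.
From mathcomp Require Import all_classical all_reals all_analysis.
Set Implicit Arguments. Unset Strict Implicit. Unset Printing Implicit Defensive.
Import Order.TTheory GRing.Theory Num.Theory.

(* Shifted Fibonacci: F 1 = 1, F 2 = 2, F (n+2) = F (n+1) + F n.
   (F 0 = 1 is an auxiliary value, never used for indices >= 1 except
   through the recurrence F 2 = F 1 + F 0.) *)
Fixpoint F (n : nat) : nat :=
  match n with
  | 0 => 1
  | 1 => 1
  | (m.+1 as p).+1 => F p + F m
  end.

(* eps : seq bool is a Zeckendorf expansion of m:
   with M = size eps and eps(k) = nth false eps (k-1) (1-indexed in the paper),
   m = sum_{k=1}^M eps(k) F_{M-k+1}, eps(1) = 1, eps(k) eps(k+1) = 0. *)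
Definition is_zeck (m : nat) (eps : seq bool) : Prop :=
  [/\ 0 < size eps,
      nth false eps 0 = true,
      (forall k, k.+1 < size eps -> ~~ (nth false eps k && nth false eps k.+1)) &
      m = \sum_(k < size eps) nth false eps k * F (size eps - k)].

Definition LB_is (s m : nat) (b : seq bool) : Prop :=
  exists eps, [/\ is_zeck m eps, s <= size eps & take s eps = b].

Definition cntLB (a n : nat) (b : seq bool) : nat :=
  \sum_(1 <= k < n.+1) nat_of_bool (asbool (LB_is 3 (a ^ k) b)).

Definition phi {R : realType} : R := (1 + Num.sqrt 5) / 2.

(* Main.v *)
Require Import Defs.
From HB Require Import structures.
From mathcomp Require Import all_boot all_order all_algebra.
From mathcomp Require Import all_classical all_reals all_analysis.
Import Order.TTheory GRing.Theory Num.Theory numFieldNormedType.Exports.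

Fixpoint zval (s : seq bool) : nat :=
  if s is b :: s' then b * F (size s').+1 + zval s' else 0.
Fixpoint nadj (s : seq bool) : bool :=
  match s with b :: ((c :: _) as s') => ~~ (b && c) && nadj s' | _ => true end.

Lemma zvalE eps : \sum_(k < size eps) nth false eps k * F (size eps - k) = zval eps.
Proof.
elim: eps => [|b s IH] /=; first by rewrite big_ord0.
rewrite big_ord_recl /= ?subn0 -IH; congr (_ + _).
Qed.

Lemma nadj_cons b s : nadj (b :: s) = ~~ (b && head false s) && nadj s.
Proof. by case: s => [|c s] /=; rewrite ?andbF. Qed.

Lemma nadjP eps :
  (forall k, k.+1 < size eps -> ~~ (nth false eps k && nth false eps k.+1)) <-> nadj eps.
Proof.
elim: eps => [|b s IH]; first by split.
rewrite nadj_cons; split.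
- move=> H; apply/andP; split.
  + case: s H IH => [|c s] H _ /=; first by rewrite andbF.
    by apply: (H 0%N).
  + by apply/IH => k Hk; apply: (H k.+1).
- move=> /andP[H1 H2] [|k] /= Hk.
  + by case: s H1 Hk H2 IH.
  + exact: (IH.2 H2 k Hk).
Qed.

Lemma F_gt0 n : 0 < F n.
Proof. elim/ltn_ind: n => [[|[|n]]] //= IH; by rewrite addn_gt0 (IH n.+1). Qed.

Lemma F_le n : F n <= F n.+1.
Proof. by case: n => [|n] //=; rewrite leq_addr. Qed.

Lemma F_mono m n : m <= n -> F m <= F n.
Proof.
move=> /subnK <-; elim: (n - m) => [|k IH] //=.
by rewrite (leq_trans IH (F_le _)).
Qed.

Arguments F_mono {m n}.

Lemma zval_lt_aux s : nadj s ->
  zval s < F (size s).+1 /\ (head false s = false -> zval s < F (size s)).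
Proof.
elim: s => [|b s IH]; first by [].
rewrite nadj_cons => /andP[H1 /IH [IH1 IH2]].
case: b H1 => /= H1.
- have hs : head false s = false by move: H1; case: (head false s).
  split=> //; rewrite mul1n /= -[X in _ < X]/(F (size s).+1 + F (size s)).
  by rewrite ltn_add2l IH2.
- split=> [|_]; rewrite mul0n add0n //.
  exact: (leq_trans IH1 (F_le _)).
Qed.

Lemma zval_lt s : nadj s -> zval s < F (size s).+1.
Proof. by move=> /zval_lt_aux []. Qed.

Lemma zval_lead s : nadj s -> F (size s) <= zval s -> head false s = true.
Proof.
case: s => [|b s] //; case: b => //; rewrite nadj_cons => /andP[_ H] /=.
by rewrite mul0n add0n leqNgt zval_lt.
Qed.

Lemma zexists L m : m < F L.+1 -> exists s, [/\ size s = L, nadj s & zval s = m].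
Proof.
elim/ltn_ind: L m => [[|L]] IH m Hm.
- by exists [::]; split=> //; case: m Hm.
- case: (ltnP m (F L.+1)) => Hm2.
  + have [s [h1 h2 h3]] := IH L (ltnSn _) m Hm2.
    by exists (false :: s); rewrite nadj_cons /= h1 h2 h3.
  + case: L IH Hm Hm2 => [|L] IH Hm Hm2.
    * exists [:: true]; split=> //=.
      by move: Hm Hm2; case: m => [|[|m]].
    * have Hm3 : m - F L.+2 < F L.+1.
        by rewrite ltn_subLR //; move: Hm => /=; rewrite addnC.
      have [s [h1 h2 h3]] := IH L (leqW (ltnSn _)) _ Hm3.
      exists [:: true, false & s]; rewrite !nadj_cons /= h1 h2 h3.
      by split=> //; rewrite mul1n mul0n add0n subnKC.
Qed.

Lemma is_zeckP m eps : is_zeck m eps ->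
  [/\ nadj eps, m = zval eps, head false eps = true & F (size eps) <= m].
Proof.
case=> h1 h2 /nadjP h3 h4; rewrite zvalE in h4.
case: eps h1 h2 h3 h4 => [|b s] //= _ -> h3 ->; split=> //.
by rewrite mul1n leq_addr.
Qed.

Arguments zval_lead {s}.
Arguments zval_lt {s}.
Lemma zval_cons b s : zval (b :: s) = b * F (size s).+1 + zval s.
Proof. by []. Qed.

Lemma LB101 M m : 3 <= M -> F M + F (M - 2) <= m -> m < F M.+1 ->
  LB_is 3 m [:: true; false; true].
Proof.
case: M => [|[|[|K]]] // _; rewrite subSS subSS subn0 => H1 H2.
have [s [hs hn hz]] := @zexists _ _ H2.
case: s hs hn hz => [|x1 [|x2 [|x3 r]]] // hs hn hz.
have hr : size r = K by case: hs.
have hx1 : x1 = true.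
  apply: (zval_lead hn); rewrite hz hs.
  exact: leq_trans (leq_addr _ _) H1.
subst x1.
move: (hn); rewrite nadj_cons (nadj_cons x2) => /andP[hx2 /andP [_ hn3]].
clear hs; case: x2 hx2 hz hn => // _ hz hn.
have hx3 : x3 = true.
  apply: (zval_lead hn3).
  move: H1; rewrite -hz !zval_cons mul1n mul0n add0n.
  by rewrite /= hr leq_add2l.
subst x3.
exists [:: true, false, true & r]; split=> //.
split=> //; first by apply/nadjP.
  by rewrite zvalE.
by case: (r).
Qed.

Lemma LB100 M m : 3 <= M -> F M <= m -> m < F M + F (M - 2) ->
  LB_is 3 m [:: true; false; false].
Proof.
case: M => [|[|[|K]]] // _; rewrite subSS subSS subn0 => H1 H2.
have H2' : m < F K.+4.
  apply: (leq_trans H2).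
  by rewrite [F K.+4]/= leq_add2l F_le.
have [s [hs hn hz]] := @zexists _ _ H2'.
case: s hs hn hz => [|x1 [|x2 [|x3 r]]] // hs hn hz.
have hr : size r = K by case: hs.
have hx1 : x1 = true by apply: (zval_lead hn); rewrite hz hs.
subst x1.
move: (hn); rewrite nadj_cons (nadj_cons x2) => /andP[hx2 /andP [_ hn3]].
clear hs; case: x2 hx2 hz hn => // _ hz hn.
case: x3 hz hn hn3 => hz hn hn3.
  move: H2; rewrite -hz !zval_cons mul1n mul0n add0n mul1n /= hr.
  by rewrite ltn_add2l -addnA ltnNge leq_addr.
exists [:: true, false, false & r]; split=> //.
split=> //; first by apply/nadjP.
  by rewrite zvalE.
by case: (r).
Qed.

Lemma LB_disj m : LB_is 3 m [:: true; false; false] ->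
  LB_is 3 m [:: true; false; true] -> False.
Proof.
move=> [e1 [/is_zeckP [n1 z1 _ l1] s1 t1]] [e2 [/is_zeckP [n2 z2 _ l2] s2 t2]].
have u1 := zval_lt n1; have u2 := zval_lt n2.
rewrite -z1 in u1; rewrite -z2 in u2.
have es : size e1 = size e2.
  apply/eqP; rewrite eqn_leq; apply/andP; split; rewrite leqNgt; apply/negP => h.
  - by have := F_mono h; rewrite leqNgt (leq_ltn_trans l1 u2).
  - by have := F_mono h; rewrite leqNgt (leq_ltn_trans l2 u1).
case: e1 s1 t1 n1 z1 u1 l1 es => [|x1 [|x2 [|x3 r1]]] // _ [-> -> -> _] n1 z1 _ _.
case: e2 s2 t2 n2 z2 u2 l2 => [|y1 [|y2 [|y3 r2]]] // _ [-> -> -> _] n2 z2 _ _ [es].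
move: n1; rewrite !nadj_cons => /andP[_ /andP[_ /andP[_ h]]].
have {h} h := zval_lt h.
move: z2; rewrite z1 !zval_cons !mul1n !mul0n !add0n /= es => /addnI hz.
by move: h; rewrite hz es ltnNge leq_addr.
Qed.

From mathcomp Require Import ring lra zify.
From Stdlib Require Import Lia.
Import Order.TTheory GRing.Theory Num.Theory numFieldNormedType.Exports.
Local Open Scope ring_scope.

Definition sq5 {R : realType} : R := Num.sqrt 5.
Definition psi {R : realType} : R := (1 - sq5) / 2.

Lemma sq5_sq {R : realType} : (sq5 : R) ^+ 2 = 5.
Proof. by rewrite /sq5 sqr_sqrtr. Qed.

Lemma sq5_bnd {R : realType} : 2 < (sq5 : R) < 3.
Proof.
have h1 : 0 <= (sq5 : R) by exact: sqrtr_ge0.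
have h2 := @sq5_sq R.
apply/andP; split; nra.
Qed.

Lemma phi_sq {R : realType} : (phi : R) ^+ 2 = phi + 1.
Proof. have h := @sq5_sq R; rewrite /phi -/sq5; rewrite expr2 in h *; nra. Qed.

Lemma psi_sq {R : realType} : (psi : R) ^+ 2 = psi + 1.
Proof. have h := @sq5_sq R; rewrite /psi; rewrite expr2 in h *; nra. Qed.

Lemma phi_gt1 {R : realType} : 1 < (phi : R).
Proof. have := @sq5_bnd R; rewrite /phi -/sq5 => /andP[h1 h2]; lra. Qed.

Lemma phi_gt0 {R : realType} : 0 < (phi : R).
Proof. by have := @phi_gt1 R; apply: lt_trans. Qed.

Lemma psi_bnd {R : realType} : -1 < (psi : R) < 0.
Proof. have := @sq5_bnd R; rewrite /psi => /andP[h1 h2]; apply/andP; split; lra. Qed.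

Lemma psiX_lt1 {R : realType} n : `|(psi : R) ^+ n| <= 1.
Proof.
have /andP[h1 h2] := @psi_bnd R.
rewrite normrX; apply: exprn_ile1 => //; rewrite ?normr_ge0 // ler_norml; apply/andP; split; lra.
Qed.

Lemma binet {R : realType} n : (sq5 : R) * (F n)%:R = phi ^+ n.+1 - psi ^+ n.+1.
Proof.
have e1 : (phi : R) - psi = sq5 by rewrite /phi /psi -/sq5; field.
elim/ltn_ind: n => [[|[|n]]] IH.
- by rewrite mulr1 !expr1.
- by rewrite [F 1]/= mulr1 phi_sq psi_sq -e1; ring.
- rewrite [F n.+2]/= natrD mulrDr (IH n.+1) // (IH n) //.
  rewrite -[n.+3]addn2 !exprD phi_sq psi_sq !exprS; ring.
Qed.

Fixpoint luc (n : nat) : nat :=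
  match n with 0 => 2 | 1 => 1 | (m.+1 as p).+1 => luc p + luc m end.

Lemma lucE {R : realType} n : ((luc n)%:R : R) = phi ^+ n + psi ^+ n.
Proof.
have e1 : (phi : R) + psi = 1 by rewrite /phi /psi -/sq5; field.
elim/ltn_ind: n => [[|[|n]]] IH.
- by rewrite !expr0.
- by rewrite !expr1 e1.
- rewrite [luc n.+2]/= natrD (IH n.+1) // (IH n) //.
  rewrite -[n.+2]addn2 !exprD phi_sq psi_sq !exprS; ring.
Qed.

Lemma lucF K : luc K.+2 = (F K.+2 + F K)%N.
Proof.
elim/ltn_ind: K => [[|[|K]]] IH //.
have lucS n : luc n.+2 = (luc n.+1 + luc n)%N by [].
have FS n : F n.+2 = (F n.+1 + F n)%N by [].
rewrite lucS (IH K.+1) // (IH K) // !FS; lia.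
Qed.


Definition alpha {R : realType} (a : nat) : R := ln (a%:R : R) / ln (phi : R).

Lemma lnphi_gt0 {R : realType} : 0 < ln (phi : R).
Proof. exact: ln_gt0 phi_gt1. Qed.

Lemma alpha_gt0 {R : realType} a : (1 < a)%N -> 0 < (alpha a : R).
Proof.
move=> ha; rewrite /alpha divr_gt0 ?lnphi_gt0 // ln_gt0 // ltr1n //.
Qed.

Lemma irrat {R : realType} a (ha : (1 < a)%N) (q : nat) (p : int) :
  (0 < q)%N -> q%:R * (alpha a : R) != p%:~R.
Proof.
move=> hq; apply/eqP => h.
have hL := @lnphi_gt0 R.
have hpos : 0 < q%:R * (alpha a : R) by rewrite mulr_gt0 ?alpha_gt0 // ltr0n.
case: p h => p' h; last first.
  by have := ler0n R p'.+1; move: hpos; rewrite h NegzE mulrNz -pmulrn; lra.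
rewrite -pmulrn in h.
have hp : p' != 0%N by apply/eqP=> e; move: hpos; rewrite h e ltxx.
have ha0 : 0 < (a%:R : R) by rewrite ltr0n; apply: ltn_trans ha.
have e1 : ((a%:R : R) ^+ q) = phi ^+ p'.
  apply: ln_inj; first by rewrite posrE exprn_gt0.
    by rewrite posrE exprn_gt0 // phi_gt0.
  rewrite lnXn // lnXn ?phi_gt0 //.
  rewrite -[ln _ *+ q]mulr_natl -[ln _ *+ p']mulr_natl.
  move: h; rewrite /alpha mulrA => /(congr1 (fun y => y * ln (phi : R))).
  by rewrite divfK ?gt_eqF // => ->.
have e2 : (psi : R) ^+ p' = (luc p')%:R - (a ^ q)%:R.
  by rewrite lucE natrX e1 addrC addKr.
have hi : (psi : R) ^+ p' \is a Num.int.
  by rewrite e2 rpredB // intr_nat // natr_nat.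
have hnz : (psi : R) ^+ p' != 0.
  by rewrite expf_neq0 //; have /andP[_ ?] := @psi_bnd R; rewrite lt_eqF.
have := norm_intr_ge1 hi hnz.
have /andP[h1 h2] := @psi_bnd R.
rewrite normrX leNgt exprn_ilt1 ?normr_ge0 ?hp // ltr_norml; apply/andP; split; lra.
Qed.


Lemma pigeon (f : nat -> nat) N : (forall i, (i <= N)%N -> (f i < N)%N) ->
  exists i j, (i < j <= N)%N /\ f i = f j.
Proof.
move=> hf; set s := map f (iota 0 N.+1).
case/boolP: (uniq s) => hu.
  have := uniq_leq_size hu (s2 := iota 0 N).
  rewrite size_map !size_iota ltnn => H; exfalso; apply: notF; apply: H.
  move=> y /mapP [i]; rewrite !mem_iota /= add0n => hi ->.
  by rewrite add0n hf.
case/(uniqPn 0%N): hu => i [j [hij hj]].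
rewrite size_map size_iota in hj.
rewrite !(nth_map 0%N) ?size_iota ?(ltn_trans hij) // !nth_iota ?(ltn_trans hij) // !add0n => e.
exists i, j; split=> //; by rewrite hij.
Qed.

Lemma dirichlet {R : realType} (x e : R) :
  (forall (q : nat) (p : int), (0 < q)%N -> q%:R * x != p%:~R) -> 0 < e ->
  exists q : nat, (0 < q)%N /\ exists p : int, 0 < `|q%:R * x - p%:~R| < e.
Proof.
move=> hx he.
set N := (Num.trunc (e^-1)).+1.
have hN : e^-1 < N%:R by exact: truncnS_gt.
pose b (i : nat) := Num.floor (N%:R * (i%:R * x)).
pose f (i : nat) := `|(b i %% N%:Z)%Z|%N.
have hf : forall i, (i <= N)%N -> (f i < N)%N.
  move=> i _; rewrite /f -ltz_nat abszE ger0_norm ?modz_ge0 ?ltz_pmod //.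
have [i [j [/andP [hij hjN] ef]]] := @pigeon f N hf.
have em : (b j %% N%:Z)%Z = (b i %% N%:Z)%Z.
  move/(congr1 Posz): ef; rewrite !abszE !ger0_norm ?modz_ge0 //.
have /dvdzP [t ht] : (N%:Z %| b j - b i)%Z by rewrite -eqz_mod_dvd; apply/eqP.
exists (j - i)%N; split; first by rewrite subn_gt0.
exists t.
have hbi := floor_itv (N%:R * (i%:R * x)).
have hbj := floor_itv (N%:R * (j%:R * x)).
rewrite -/(b i) -/(b j) !intrD in hbi hbj.
set D := (j - i)%:R * x - t%:~R.
have hD : N%:R * D = (N%:R * (j%:R * x) - (b j)%:~R) - (N%:R * (i%:R * x) - (b i)%:~R).
  have : ((b j - b i)%:~R : R) = t%:~R * N%:R by rewrite ht intrM.
  rewrite intrB /D natrB 1?ltnW // => h.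
  have -> : (b j)%:~R = (b i)%:~R + t%:~R * (N%:R : R) by rewrite -h; ring.
  ring.
have hND : `|N%:R * D| < 1.
  rewrite hD ltr_norml; move: hbi hbj => /andP[h1 h2] /andP[h3 h4].
  apply/andP; split; lra.
rewrite normrM ger0_norm ?ler0n // in hND.
have hDn : D != 0 by rewrite subr_eq0 hx // subn_gt0.
have hee : e * e^-1 = 1 by rewrite mulfV // gt_eqF.
have hD0 : 0 <= `|D| by [].
apply/andP; split; first by rewrite normr_gt0.
have hN0 : 0 < (N%:R : R) by rewrite ltr0n.
nra.
Qed.

Definition G {R : realType} (u v x : R) : Prop :=
  exists z : int, z%:~R + u <= x <= z%:~R + v.

Lemma blk (P : nat -> bool) a m : (forall j, (j < m)%N -> P (a + j)%N) ->
  (\sum_(a <= i < a + m) (P i : nat) = m)%N.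
Proof.
elim: m => [|m IH] H; first by rewrite addn0 big_geq.
rewrite addnS big_nat_recr ?leq_addr //= IH ?H //.
  by rewrite addn1.
by move=> j hj; apply: H; apply: ltnW.
Qed.

Lemma sum_ge (P : nat -> bool) a b c : (a <= b <= c)%N ->
  (\sum_(a <= i < b) (P i : nat) <= \sum_(a <= i < c) (P i : nat))%N.
Proof.
move=> /andP[h1 h2]; rewrite (@big_cat_nat _ _ _ b a c) //=; exact: leq_addr.
Qed.

Lemma block_count {R : realType} (u v y d : R) (m N Z : nat) (P : nat -> bool) :
  0 < d -> m%:R * d <= v - u -> v - u <= 1 -> ((0 < Z)%N -> Z%:R <= (N%:R - 1 - m%:R) * d) ->
  (forall i, G u v (y + i%:R * d) -> P i) ->
  (Z * m <= \sum_(0 <= i < N) (P i : nat))%N.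
Proof.
move=> hd hm hw hZ HP.
set z0 := Num.ceil (y - u).
have hz0 := ceil_itv (y - u); rewrite -/z0 intrB in hz0.
pose s (t : nat) := Num.ceil (((z0 + t%:Z)%:~R + u - y) / d).
pose sn t := `|s t|%N.
have hs t : ((sn t)%:R : R) - 1 < ((z0 + t%:Z)%:~R + u - y) / d <= (sn t)%:R.
  have hi := ceil_itv (((z0 + t%:Z)%:~R + u - y) / d).
  rewrite -/(s t) intrB in hi.
  have s0 : (0 <= s t)%R.
    rewrite /s ceil_ge0; apply: lt_le_trans (_ : 0 <= _).
      by rewrite ltrN10.
    apply: divr_ge0; last exact: ltW.
    rewrite intrD -pmulrn.
    by move: hz0 => /andP[_ h]; have := ler0n R t; lra.
  by rewrite /sn natr_absz ger0_norm.
have hz0' : y - u <= z0%:~R < y - u + 1.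
  by move: hz0 => /andP[h1 h2]; apply/andP; split; lra.
have hs' t : ((sn t)%:R : R) * d - d < z0%:~R + t%:R + u - y <= (sn t)%:R * d.
  have := hs t; rewrite intrD -pmulrn.
  set X := (z0%:~R + t%:R + u - y).
  have eX : X / d * d = X by rewrite divfK // gt_eqF.
  move=> /andP[h1 h2]; apply/andP; split; nra.
have F2 t j : (j < m)%N -> G u v (y + (sn t + j)%:R * d).
  move=> hj; exists (z0 + t%:Z); rewrite intrD -pmulrn natrD mulrDl.
  have hjd : 0 <= (j%:R : R) * d by rewrite mulr_ge0 ?ler0n // ltW.
  have hjm : (j%:R : R) * d + d <= m%:R * d.
    by rewrite -[X in _ + X]mul1r -mulrDl ler_pM2r // natr1 ler_nat.
  have := hs' t => /andP[h1 h2].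
  apply/andP; split; lra.
have F3 t : (sn t + m <= sn t.+1)%N.
  have := hs' t => /andP[h1 h2].
  have := hs' t.+1 => /andP[h3 h4].
  rewrite -natr1 in h3 h4.
  rewrite -ltnS -(ltr_nat R) -addn1 !natrD.
  nra.
have F4 t : (t < Z)%N -> (sn t + m <= N)%N.
  move=> htZ.
  have {}hZ := hZ (leq_ltn_trans (leq0n _) htZ).
  have := hs' t => /andP[h1 h2].
  have htZ' : (t%:R : R) + 1 <= Z%:R by rewrite natr1 ler_nat.
  rewrite -(ler_nat R) natrD.
  move: hz0' => /andP[h5 h6].
  nra.
have IH t : (t < Z)%N -> (t.+1 * m <= \sum_(0 <= i < sn t + m) (P i : nat))%N.
  elim: t => [|t IH] ht.
    rewrite mul1n (@big_cat_nat _ _ _ (sn 0) 0 (sn 0 + m)); last exact: leq_addr.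
      rewrite /= blk; first exact: leq_addl.
      by move=> j hj; apply: HP; apply: F2.
    exact: leq0n.
  rewrite (@big_cat_nat _ _ _ (sn t.+1) 0 (sn t.+1 + m)) /=; last exact: leq_addr.
    rewrite blk; last by move=> j hj; apply: HP; apply: F2.
    rewrite mulSn addnC leq_add2r.
    apply: leq_trans (IH (ltnW ht)) _.
    by apply: sum_ge; rewrite leq0n F3.
  exact: leq0n.
case: Z hZ IH F4 => [|Z'] hZ IH F4; first by rewrite mul0n.
apply: leq_trans (IH Z' (ltnSn _)) _.
by apply: sum_ge; rewrite leq0n F4.
Qed.

Lemma G_shift {R : realType} (u v x : R) (z : int) : G u v x -> G u v (x + z%:~R).
Proof.
move=> [z0 /andP[h1 h2]]; exists (z0 + z); rewrite intrD.
apply/andP; split; lra.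
Qed.

Lemma G_neg {R : realType} (u v x : R) : G (- v) (- u) (- x) -> G u v x.
Proof.
move=> [z0 /andP[h1 h2]]; exists (- z0); rewrite intrN.
apply/andP; split; lra.
Qed.

Lemma sum_res (f : nat -> nat) q N :
  (\sum_(0 <= k < N * q) f k = \sum_(0 <= r < q) \sum_(0 <= i < N) f (i * q + r))%N.
Proof.
elim: N => [|N IH].
  by rewrite mul0n big_geq // big1 // => r _; rewrite big_geq.
rewrite mulSn addnC (@big_cat_nat _ _ _ (N * q) 0 (N * q + q)) ?leq_addr //= IH.
rewrite -{1}[(N * q)%N]add0n big_addn addKn.
rewrite -big_split /=; apply: eq_bigr => r _.
by rewrite big_nat_recr //= [(r + _)%N]addnC.
Qed.

Lemma sum_lt_K0 K0 n : (\sum_(0 <= k < n) ((k < K0)%N : nat) <= K0)%N.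
Proof.
apply: (@leq_trans (\sum_(0 <= k < K0 + n) ((k < K0)%N : nat))).
  by apply: sum_ge; rewrite leq0n leq_addl.
rewrite (@big_cat_nat _ _ _ K0 0 (K0 + n)) ?leq_addr //=.
rewrite -{1}[K0]add0n blk; last by move=> j hj; rewrite add0n.
rewrite big_nat_cond big1 ?addn0 // => i /andP[/andP[hi _] _].
by rewrite ltnNge hi.
Qed.

Lemma freq_lb {R : realType} (al u v : R) (P : nat -> bool) (K0 : nat) :
  (forall (q : nat) (p : int), (0 < q)%N -> q%:R * al != p%:~R) ->
  0 <= v - u -> v - u <= 1 ->
  (forall k, (K0 <= k)%N -> G u v (k%:R * al) -> P k) ->
  forall e, 0 < e -> exists N0 : nat, forall n, (N0 <= n)%N ->
    (v - u) - e <= (\sum_(1 <= k < n.+1) (P k : nat))%:R / n%:R.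
Proof.
move=> hal hw0 hw1 HP e he.
have he2 : 0 < e / 2 by rewrite divr_gt0.
have [q [hq [p /andP[hd0 hde]]]] := @dirichlet R al _ hal he2.
move: hd0 hde; set eta := q%:R * al - p%:~R => hd0 hde.
move: hd0 hde; set d : R := `|eta| => hd0 hde.
set w := v - u.
set m := Num.trunc (w / d).
have ewd : w / d * d = w by rewrite divfK // gt_eqF.
have hm1 : m%:R * d <= w.
  have : (m%:R : R) <= w / d by rewrite truncn_le divr_ge0 // ltW.
  by rewrite ler_pdivlMr.
have hm2 : w < m%:R * d + d.
  have : w / d < (m.+1)%:R by exact: truncnS_gt.
  by rewrite ltr_pdivrMr // -natr1 mulrDl mul1r.
pose P' k := P k || (k < K0)%N.
pose Z n := Num.trunc (((n %/ q)%:R - 1 - m%:R) * d).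
have hcount n : (q * Z n * m <= \sum_(0 <= k < n) (P' k : nat))%N.
  apply: (@leq_trans (\sum_(0 <= k < (n %/ q) * q) (P' k : nat))); last first.
    by apply: sum_ge; rewrite leq0n leq_trunc_div.
  rewrite sum_res.
  apply: (@leq_trans (\sum_(0 <= r < q) (Z n * m))).
    by rewrite sum_nat_const_nat subn0 mulnA.
  apply: leq_sum => r _.
  have hZ : (0 < Z n)%N -> (Z n)%:R <= ((n %/ q)%:R - 1 - m%:R) * d.
    rewrite /Z truncn_gt0 => h; rewrite truncn_le; apply: le_trans h; exact: ler01.
  have key i : G u v (r%:R * al + i%:R * eta) -> P' (i * q + r)%N.
    move=> hG; rewrite /P'; case: (ltnP (i * q + r) K0) => hk; first by rewrite orbT.
    apply/orP; left; apply: HP => //.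
    have -> : (i * q + r)%:R * al = r%:R * al + i%:R * eta + (i%:Z * p)%:~R.
      by rewrite intrM -pmulrn /eta natrD natrM; ring.
    exact: G_shift.
  have hd : 0 < d by [].
  case: (ltP 0 eta) => heta.
    apply: (@block_count R u v (r%:R * al) d m (n %/ q) (Z n)) => // i hG.
    by apply: key; rewrite /d ger0_norm ?ltW in hG.
  apply: (@block_count R (- v) (- u) (- (r%:R * al)) d m (n %/ q) (Z n)).
  - by [].
  - by rewrite opprK addrC.
  - by rewrite opprK addrC.
  - by [].
  - move=> i hG; apply: key; apply: G_neg.
    by rewrite /d ler0_norm // in hG; move: hG; rewrite mulrN opprD.
set C : R := m%:R * d * q%:R + q%:R * m%:R * (1 + m%:R) * d + q%:R * m%:R + K0%:R + 1.
have hC0 : 0 <= C.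
  have : 0 <= (m%:R : R) * d by rewrite mulr_ge0 ?ler0n // ltW.
  have : 0 <= (q%:R : R) * m%:R by rewrite mulr_ge0 ?ler0n.
  have : 0 <= (q%:R : R) * m%:R * (1 + m%:R) * d.
    by rewrite !mulr_ge0 ?ler0n ?addr_ge0 ?ler01 // ltW.
  have : 0 <= (m%:R : R) * d * q%:R by rewrite !mulr_ge0 ?ler0n // ltW.
  have := ler0n R K0.
  rewrite /C; lra.
exists (Num.trunc (2 * C / e)).+1 => n hn.
have hn0 : (0 < n)%N by apply: leq_trans hn.
have hnr : 0 < (n%:R : R) by rewrite ltr0n.
set cnt := (\sum_(1 <= k < n.+1) (P k : nat))%N.
have hc : (q * Z n * m <= cnt + K0 + 1)%N.
  apply: leq_trans (hcount n) _.
  apply: (@leq_trans (\sum_(0 <= k < n) ((P k : nat) + ((k < K0)%N : nat)))).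
    by apply: leq_sum => k _; rewrite /P'; case: (P k); case: (k < K0)%N.
  rewrite big_split /= [X in (_ <= X)%N]addnAC; apply: leq_add; last exact: sum_lt_K0.
  rewrite addnC; apply: (@leq_trans (\sum_(0 <= k < n.+1) (P k : nat))).
    by apply: sum_ge; rewrite leq0n leqnSn.
  by rewrite big_ltn // leq_add2r leq_b1.
have hcr : (q%:R : R) * (Z n)%:R * m%:R <= cnt%:R + K0%:R + 1.
  by rewrite -!natrM -natrD natr1 ler_nat -addn1.
have hZr : (((n %/ q)%:R : R) - 1 - m%:R) * d < (Z n)%:R + 1.
  by rewrite natr1; exact: truncnS_gt.
have hNr : (n%:R : R) < (n %/ q)%:R * q%:R + q%:R.
  by rewrite -natrM -natrD ltr_nat addnC -mulSn; exact: ltn_ceil.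
have hqm : 0 <= (q%:R : R) * m%:R by rewrite mulr_ge0 ?ler0n.
have hmd : 0 <= (m%:R : R) * d by rewrite mulr_ge0 ?ler0n // ltW.
have hA : q%:R * m%:R * ((((n %/ q)%:R : R) - 1 - m%:R) * d - 1) <= q%:R * m%:R * (Z n)%:R.
  by apply: ler_wpM2l => //; lra.
have hB : m%:R * d * ((n%:R : R) - q%:R) <= m%:R * d * ((n %/ q)%:R * q%:R).
  by apply: ler_wpM2l => //; lra.
have hD : (w - e / 2) * n%:R <= m%:R * d * n%:R.
  by apply: ler_wpM2r; [exact: ltW | lra].
have hN : 2 * C / e < n%:R.
  apply: lt_le_trans (truncnS_gt _) _; rewrite ler_nat; exact: hn.
have hN' : 2 * C < n%:R * e by rewrite -ltr_pdivrMr.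
rewrite ler_pdivlMr //.
have e3 : (q%:R : R) * (Z n)%:R * m%:R = q%:R * m%:R * (Z n)%:R by ring.
rewrite e3 in hcr.
rewrite /C in hN'.
nra.
Qed.

Definition E {R : realType} (x : R) : R := expR (x * ln (phi : R)).

Lemma E_gt0 {R : realType} (x : R) : 0 < E x.
Proof. exact: expR_gt0. Qed.

Lemma ED {R : realType} (x y : R) : E (x + y) = E x * E y.
Proof. by rewrite /E mulrDl expRD. Qed.

Lemma EN {R : realType} (x : R) : E (- x) = (E x)^-1.
Proof. by rewrite /E mulNr expRN. Qed.

Lemma Ele {R : realType} (x y : R) : x <= y -> E x <= E y.
Proof. by move=> h; rewrite /E ler_expR ler_pM2r // lnphi_gt0. Qed.

Lemma Enat {R : realType} (M : nat) : E (M%:R : R) = phi ^+ M.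
Proof.
have hp : (phi : R) ^+ M \is Num.pos by rewrite posrE exprn_gt0 // phi_gt0.
by rewrite /E mulr_natl -lnXn ?phi_gt0 // lnK.
Qed.

Lemma E1 {R : realType} : E (1 : R) = phi.
Proof. by have := @Enat R 1; rewrite expr1. Qed.

Definition B {R : realType} : R := 1 + (phi : R) ^-2.
Definition beta {R : realType} : R := ln (B : R) / ln (phi : R).

Lemma B_eq {R : realType} : (B : R) = sq5 / phi.
Proof.
have hp : (phi : R) != 0 by rewrite gt_eqF // phi_gt0.
have hp1 : (phi : R) + 1 != 0 by rewrite gt_eqF // addr_gt0 // phi_gt0.
have e5 : (sq5 : R) = 2 * phi - 1 by rewrite /phi -/sq5; field.
rewrite /B phi_sq e5; apply/eqP; rewrite -subr_eq0.
have -> : 1 + (phi + 1)^-1 - (2 * phi - 1) / phi = - (phi ^+ 2 - phi - 1) / (phi * (phi + 1)) :> R.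
  by field; apply/andP.
rewrite phi_sq; have -> : (phi : R) + 1 - phi - 1 = 0 by ring.
by rewrite oppr0 mul0r.
Qed.

Lemma B_gt1 {R : realType} : 1 < (B : R).
Proof. by rewrite /B ltrDl invr_gt0 exprn_gt0 // phi_gt0. Qed.

Lemma Ebeta {R : realType} : E (beta : R) = B.
Proof.
rewrite /E /beta divfK ?gt_eqF ?lnphi_gt0 // lnK // posrE.
by apply: lt_trans B_gt1.
Qed.

Lemma beta_bnd {R : realType} : 0 < (beta : R) < 1.
Proof.
have hL := @lnphi_gt0 R.
apply/andP; split; first by rewrite divr_gt0 // ln_gt0 // B_gt1.
have hB0 : 0 < (B : R) by apply: lt_trans B_gt1.
rewrite ltr_pdivrMr // mul1r ltr_ln ?posrE ?phi_gt0 ?hB0 //.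
rewrite B_eq ltr_pdivrMr ?phi_gt0 // -expr2 phi_sq.
by have := @sq5_bnd R; rewrite /phi -/sq5 => /andP[_ h]; lra.
Qed.

Lemma phiX_big {R : realType} (c : R) : 0 < c ->
  exists M0 : nat, forall M, (M0 <= M)%N -> 1 < phi ^+ M * c.
Proof.
move=> hc.
have hp := @phi_gt1 R.
have bern M : M%:R * ((phi : R) - 1) <= phi ^+ M.
  elim: M => [|M IH]; first by rewrite mul0r exprn_ge0 // ltW // phi_gt0.
  have h1 : 1 <= (phi : R) ^+ M by rewrite exprn_ege1 // ltW.
  rewrite exprS -natr1 mulrDl mul1r.
  have -> : (phi : R) * phi ^+ M = phi ^+ M + (phi - 1) * phi ^+ M by ring.
  have : ((phi : R) - 1) * 1 <= (phi - 1) * phi ^+ M by rewrite ler_wpM2l // subr_ge0 ltW.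
  lra.
have hpc : 0 < c * ((phi : R) - 1) by rewrite mulr_gt0 // subr_gt0.
exists (Num.trunc ((c * ((phi : R) - 1))^-1)).+1 => M hM.
have h1 : (c * ((phi : R) - 1))^-1 < M%:R.
  apply: lt_le_trans (truncnS_gt _) _; rewrite ler_nat; exact: hM.
have h2 : 1 < M%:R * (c * ((phi : R) - 1)).
  by rewrite -ltr_pdivrMr // div1r.
have := bern M; have := ler0n R M.
have : 0 < c by [].
nra.
Qed.

Lemma EA {R : realType} a k : (1 < a)%N -> E (k%:R * alpha a : R) = (a ^ k)%:R.
Proof.
move=> ha.
have ha0 : 0 < (a%:R : R) by rewrite ltr0n; apply: ltn_trans ha.
rewrite /E /alpha -mulrA divfK ?gt_eqF ?lnphi_gt0 // mulr_natl -lnXn // lnK ?natrX //.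
by rewrite posrE exprn_gt0.
Qed.

Lemma K0_ex {R : realType} a (ha : (1 < a)%N) (X : R) :
  exists K0 : nat, forall k, (K0 <= k)%N -> X <= k%:R * alpha a.
Proof.
have hal := @alpha_gt0 R a ha.
exists (Num.trunc (X / alpha a)).+1 => k hk.
have : X / alpha a < k%:R.
  apply: lt_le_trans (truncnS_gt _) _; rewrite ler_nat; exact: hk.
by rewrite ltr_pdivrMr // => /ltW.
Qed.

Lemma G_nat {R : realType} (u v x : R) (M0 : nat) :
  G u v x -> v <= 1 -> M0%:R + 1 <= x ->
  exists M : nat, [/\ (M0 <= M)%N, M%:R + u <= x & x <= M%:R + v].
Proof.
move=> [z /andP[h1 h2]] hv hx.
have hz : M0%:R <= (z%:~R : R) by lra.
case: z h1 h2 hz => M h1 h2 hz.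
  rewrite -pmulrn in h1 h2 hz.
  by exists M; split=> //; rewrite -(ler_nat R).
move: hz; rewrite NegzE mulrNz -pmulrn => hz; exfalso.
by have := ler0n R M0; have := ltr0Sn R M; lra.
Qed.

Lemma Ed_gt1 {R : realType} (d : R) : 0 < d -> 1 < E d.
Proof. by move=> hd; rewrite /E expR_gt1 mulr_gt0 // lnphi_gt0. Qed.

Lemma Binv {R : realType} : (B : R)^-1 = phi / sq5.
Proof. by rewrite B_eq invf_div. Qed.

Lemma sq5_gt0 {R : realType} : 0 < (sq5 : R).
Proof. by have /andP[h _] := @sq5_bnd R; apply: lt_trans h. Qed.

Lemma psiX_bnd {R : realType} n : -1 <= (psi : R) ^+ n <= 1.
Proof. by rewrite -ler_norml psiX_lt1. Qed.

Lemma cond_common {R : realType} a (ha : (1 < a)%N) (d : R) : 0 < d ->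
  exists K0 : nat, forall k, (K0 <= k)%N -> forall u v : R, v <= 1 ->
    G u v (k%:R * alpha a) ->
    exists M : nat, (3 <= M)%N /\
      (forall j, (M <= j)%N -> 1 < phi ^+ j * (E d - 1) /\ 1 < phi ^+ j * (1 - (E d)^-1)) /\
      E (M%:R + u) <= (a ^ k)%:R /\ (a ^ k)%:R <= E (M%:R + v).
Proof.
move=> hd.
have hEd : 1 < E d := @Ed_gt1 R d hd.
have hc1 : 0 < E d - 1 by rewrite subr_gt0.
have hc2 : 0 < 1 - (E d)^-1 by rewrite subr_gt0 invf_lt1 // (lt_trans _ hEd).
have [M1 h1] := @phiX_big R _ hc1.
have [M2 h2] := @phiX_big R _ hc2.
set M0 := maxn (maxn M1 M2) 3.
have [K0 hK0] := @K0_ex R a ha (M0%:R + 1).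
exists K0 => k hk u v hv hG.
have [M [hM hl hu]] := @G_nat R _ _ _ M0 hG hv (hK0 k hk).
have hM1 : (M1 <= M)%N by apply: leq_trans hM; rewrite /M0 !leq_max leqnn.
have hM2 : (M2 <= M)%N by apply: leq_trans hM; rewrite /M0 !leq_max leqnn orbT.
have hM3 : (3 <= M)%N by apply: leq_trans hM; rewrite /M0 !leq_max leqnn orbT.
exists M; split=> //; split; [|split].
- by move=> j hj; split; [apply: h1 | apply: h2]; apply: leq_trans hj.
- by rewrite -(@EA R a k ha); apply: Ele.
- by rewrite -(@EA R a k ha); apply: Ele.
Qed.

Lemma lucM M : (3 <= M)%N -> (F M + F (M - 2))%N = luc M.
Proof. by case: M => [|[|K]] // _; rewrite lucF subSS subSS subn0. Qed.

Lemma cond101 {R : realType} a (ha : (1 < a)%N) (d : R) : 0 < d ->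
  exists K0 : nat, forall k, (K0 <= k)%N ->
    G d (1 - beta - d) (k%:R * alpha a) -> LB_is 3 (a ^ k) [:: true; false; true].
Proof.
move=> hd.
have [K0 HK] := @cond_common R a ha d hd.
exists K0 => k hk hG.
have hb := @beta_bnd R.
have hv : 1 - beta - d <= 1 by move: hb => /andP[hb1 hb2]; lra.
have [M [hM3 [hj [hlow hup]]]] := HK k hk _ _ hv hG.
have hEd : 1 < E d := @Ed_gt1 R d hd.
have [h1 h2] := hj M (leqnn _).
have [_ h2'] := hj M.+2 (leqW (leqnSn M)).
rewrite ED Enat in hlow.
rewrite !ED Enat E1 EN EN Ebeta Binv in hup.
have hs := @sq5_gt0 R.
apply: (@LB101 M) => //.
- rewrite -(ler_nat R) lucM // lucE.
  have := psiX_bnd (R := R) M => /andP[_ hp].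
  lra.
- rewrite -(ltr_nat R) -(ltr_pM2l hs) binet.
  have := psiX_bnd (R := R) M.+2 => /andP[_ hp].
  have e : sq5 * (phi ^+ M * (phi * (phi / sq5) * (E d)^-1)) = (phi : R) ^+ M.+2 * (E d)^-1.
    have hE0 : E d != 0 by rewrite gt_eqF // E_gt0.
    have hs0 : (sq5 : R) != 0 by rewrite gt_eqF.
    by rewrite !exprS; field; rewrite hE0 hs0.
  have : (sq5 : R) * (a ^ k)%:R <= phi ^+ M.+2 * (E d)^-1.
    by rewrite -e ler_pM2l.
  lra.
Qed.

Lemma cond100 {R : realType} a (ha : (1 < a)%N) (d : R) : 0 < d ->
  exists K0 : nat, forall k, (K0 <= k)%N ->
    G (1 - beta + d) (1 - d) (k%:R * alpha a) -> LB_is 3 (a ^ k) [:: true; false; false].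
Proof.
move=> hd.
have [K0 HK] := @cond_common R a ha d hd.
exists K0 => k hk hG.
have hb := @beta_bnd R.
have hv : 1 - d <= 1 by lra.
have [M [hM3 [hj [hlow hup]]]] := HK k hk _ _ hv hG.
have hEd : 1 < E d := @Ed_gt1 R d hd.
have [_ h2] := hj M.+1 (leqnSn M).
have [h1 _] := hj M.+2 (leqW (leqnSn M)).
have e1 : (M%:R : R) + (1 - beta + d) = M.+1%:R + (- beta) + d by rewrite -natr1; ring.
have e2 : (M%:R : R) + (1 - d) = M.+1%:R + - d by rewrite -natr1; ring.
rewrite e1 !ED Enat EN Ebeta Binv in hlow.
rewrite e2 ED Enat EN in hup.
have hs := @sq5_gt0 R.
have hM3' : (3 <= M.+1)%N by apply: leqW.
apply: (@LB100 M.+1) => //.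
- rewrite -(ler_nat R) -(ler_pM2l hs) binet.
  have := psiX_bnd (R := R) M.+2 => /andP[hp _].
  have e : sq5 * (phi ^+ M.+1 * (phi / sq5) * E d) = (phi : R) ^+ M.+2 * E d.
    have hE0 : E d != 0 by rewrite gt_eqF // E_gt0.
    have hs0 : (sq5 : R) != 0 by rewrite gt_eqF.
    by rewrite [in RHS]exprS; field.
  have : (phi : R) ^+ M.+2 * E d <= sq5 * (a ^ k)%:R.
    by rewrite -e ler_pM2l.
  lra.
- rewrite -(ltr_nat R) lucM // lucE.
  have := psiX_bnd (R := R) M.+1 => /andP[hp _].
  lra.
Qed.

Lemma lower_bounds {R : realType} a (ha : (1 < a)%N) (eps : R) : 0 < eps ->
  exists N0 : nat, forall n, (N0 <= n)%N ->
    beta - eps <= (cntLB a n [:: true; false; false])%:R / n%:R /\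
    (1 - beta) - eps <= (cntLB a n [:: true; false; true])%:R / n%:R.
Proof.
move=> he.
have /andP[hb1 hb2] := @beta_bnd R.
set d := Num.min (eps / 4) (Num.min (beta / 4) ((1 - beta) / 4)).
have := le_min d (eps / 4) (Num.min (beta / 4) ((1 - beta) / 4)).
rewrite lexx => /esym/andP[hd1 hd23].
have := le_min d (beta / 4) ((1 - beta) / 4).
rewrite hd23 => /esym/andP[hd2 hd3].
have hd0 : 0 < d by rewrite !lt_min; apply/and3P; split; lra.
have hal := @irrat R a ha.
have he2 : 0 < eps / 2 by lra.
have [K1 HK1] := @cond100 R a ha d hd0.
have [K2 HK2] := @cond101 R a ha d hd0.
have [N1 HN1] := @freq_lb R (alpha a) (1 - beta + d) (1 - d)
  (fun k => asbool (LB_is 3 (a ^ k) [:: true; false; false])) K1 hal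
  ltac:(lra) ltac:(lra) (fun k hk hG => asboolT (HK1 k hk hG)) _ he2.
have [N2 HN2] := @freq_lb R (alpha a) d (1 - beta - d)
  (fun k => asbool (LB_is 3 (a ^ k) [:: true; false; true])) K2 hal
  ltac:(lra) ltac:(lra) (fun k hk hG => asboolT (HK2 k hk hG)) _ he2.
exists (maxn N1 N2) => n hn.
have := HN1 n (leq_trans (leq_maxl _ _) hn).
have := HN2 n (leq_trans (leq_maxr _ _) hn).
rewrite /cntLB => h2 h1; split; lra.
Qed.

Lemma cnt_disj a n :
  (cntLB a n [:: true; false; false] + cntLB a n [:: true; false; true] <= n)%N.
Proof.
rewrite /cntLB -big_split /=.
apply: (@leq_trans (\sum_(1 <= k < n.+1) 1%N)).
  apply: leq_sum => k _.
  case: asboolP => h1; case: asboolP => h2 //.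
  by exfalso; exact: LB_disj h1 h2.
by rewrite sum_nat_const_nat subn1 muln1.
Qed.

Local Open Scope classical_set_scope.

Theorem theorem1p3 (R : realType) (a : nat) (ha : (1 < a)%N) :
  (fun n : nat => (cntLB a n [:: true; false; false])%:R / n%:R : R) @ \oo
     --> ln (1 + (@phi R) ^-2) / ln (@phi R)
  /\
  (fun n : nat => (cntLB a n [:: true; false; true])%:R / n%:R : R) @ \oo
     --> ln ((@phi R) / (1 + (@phi R) ^-2)) / ln (@phi R).
Proof.
have eb : ln (1 + (@phi R) ^-2) / ln (@phi R) = beta by [].
have hL := @lnphi_gt0 R.
have hB0 : 0 < (B : R) by apply: lt_trans (@B_gt1 R).
have eb2 : ln ((@phi R) / (1 + (@phi R) ^-2)) / ln (@phi R) = 1 - beta.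
  rewrite -/(B : R) ln_div ?posrE ?phi_gt0 // /beta.
  by field; rewrite gt_eqF.
rewrite eb eb2.
have key (eps : R) : 0 < eps -> exists N0 : nat, forall n, (N0 <= n)%N ->
    `|beta - (cntLB a n [:: true; false; false])%:R / n%:R| <= eps /\
    `|(1 - beta) - (cntLB a n [:: true; false; true])%:R / n%:R| <= eps.
  move=> he.
  have [N0 HN] := @lower_bounds R a ha eps he.
  exists (maxn N0 1) => n hn.
  have hn0 : 0 < (n%:R : R) by rewrite ltr0n; apply: leq_trans hn; rewrite leq_maxr.
  have [h1 h2] := HN n (leq_trans (leq_maxl _ _) hn).
  have hs : (cntLB a n [:: true; false; false])%:R / n%:R +
            (cntLB a n [:: true; false; true])%:R / n%:R <= 1 :> R.
    rewrite -mulrDl -natrD ler_pdivrMr // mul1r ler_nat; exact: cnt_disj.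
  by split; rewrite ler_norml; apply/andP; split; lra.
split; apply/cvgrPdist_le => eps he; have [N0 HN] := key eps he;
  exists N0 => // n /= hn; have [? ?] := HN n hn; done.
Qed.
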